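(* Let $n\ge1$, $\boldsymbol\alpha=(\alpha_1,\dots,\alpha_n)\in((0,\pi)\setminus\mathcal E)^n$, $\boldsymbol\ell=(\ell_1,\dots,\ell_n)\in(0,\infty)^n$, $\sigma\in\mathbb R$. Then the matrix $\mathtt T(\boldsymbol\alpha,\boldsymbol\ell,\sigma)$ has the form $\begin{pmatrix}p_n&q_n\\ \bar q_n&\bar p_n\end{pmatrix}$ with $|p_n|^2-|q_n|^2=1$, where $$p_n=\frac{1}{\prod_{j=1}^n\sin\frac{\pi^2}{2\alpha_j}}\sum_{\substack{\boldsymbol\zeta\in\{\pm1\}^n\\ \zeta_1=1}}\mathfrak p_{\boldsymbol\zeta}\,e^{i\,\boldsymbol\ell\cdot\boldsymbol\zeta\,\sigma},\qquad q_n=\frac{-i}{\prod_{j=1}^n\sin\frac{\pi^2}{2\alpha_j}}\sum_{\substack{\boldsymbol\zeta\in\{\pm1\}^n\\ \zeta_1=1}}\mathfrak q_{\boldsymbol\zeta}\,e^{-i\,\boldsymbol\ell\cdot\boldsymbol\zeta\,\sigma}.$$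
   Context: $\mathcal E=\{\pi/(2k):k\in\mathbb N\}$. For $\alpha\notin\mathcal E$, $\mathtt A(\alpha)=\begin{pmatrix}\csc\frac{\pi^2}{2\alpha}&-i\cot\frac{\pi^2}{2\alpha}\\ i\cot\frac{\pi^2}{2\alpha}&\csc\frac{\pi^2}{2\alpha}\end{pmatrix}$, $\mathtt B(\ell,\sigma)=\operatorname{diag}(e^{i\ell\sigma},e^{-i\ell\sigma})$, and $\mathtt T(\boldsymbol\alpha,\boldsymbol\ell,\sigma)=\mathtt A(\alpha_n)\mathtt B(\ell_n,\sigma)\cdots\mathtt A(\alpha_1)\mathtt B(\ell_1,\sigma)$. For $\boldsymbol\zeta\in\{\pm1\}^n$: $\mathrm{ch}(\boldsymbol\zeta)=\{j\in\{1,\dots,n\}:\zeta_j\ne\zeta_{j+1}\}$ with cyclic convention $\zeta_{n+1}=\zeta_1$; $\widetilde{\mathrm{ch}}(\boldsymbol\zeta)=\{j\in\{1,\dots,n\}:\zeta_j\ne\zeta_{j+1}\}$ with the convention $\zeta_{n+1}=-1$ instead; $\mathfrak p_{\boldsymbol\zeta}=\prod_{j\in\mathrm{ch}(\boldsymbol\zeta)}\cos\frac{\pi^2}{2\alpha_j}$, $\mathfrak q_{\boldsymbol\zeta}=\prod_{j\in\widetilde{\mathrm{ch}}(\boldsymbol\zeta)}\cos\frac{\pi^2}{2\alpha_j}$ (empty products equal $1$); $\boldsymbol\ell\cdot\boldsymbol\zeta=\sum_j\ell_j\zeta_j$. *)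

(* Defs.v *)
From Stdlib Require Import Reals List.
Import ListNotations.
Open Scope R_scope.

Record C := mkC { re : R ; im : R }.
Definition RtoC (x : R) : C := mkC x 0.
Definition C0 : C := RtoC 0.
Definition C1 : C := RtoC 1.
Definition Ci : C := mkC 0 1.
Definition Cadd (z w : C) : C := mkC (re z + re w) (im z + im w).
Definition Cmul (z w : C) : C :=
  mkC (re z * re w - im z * im w) (re z * im w + im z * re w).
Definition Cscale (r : R) (z : C) : C := mkC (r * re z) (r * im z).
Definition Cconj (z : C) : C := mkC (re z) (- im z).
Definition Cnorm2 (z : C) : R := re z * re z + im z * im z.
Definition Cexpi (t : R) : C := mkC (cos t) (sin t).

Definition Csum (l : list C) : C := fold_right Cadd C0 l.

Record M2 := mkM2 { m11 : C ; m12 : C ; m21 : C ; m22 : C }.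
Definition Mmul (X Y : M2) : M2 :=
  mkM2 (Cadd (Cmul (m11 X) (m11 Y)) (Cmul (m12 X) (m21 Y)))
       (Cadd (Cmul (m11 X) (m12 Y)) (Cmul (m12 X) (m22 Y)))
       (Cadd (Cmul (m21 X) (m11 Y)) (Cmul (m22 X) (m21 Y)))
       (Cadd (Cmul (m21 X) (m12 Y)) (Cmul (m22 X) (m22 Y))).
Definition Mid : M2 := mkM2 C1 C0 C0 C1.

Definition in_E (a : R) : Prop := exists k : nat, (1 <= k)%nat /\ a = PI / (2 * INR k).

Definition theta (a : R) : R := PI ^ 2 / (2 * a).

Definition Amat (a : R) : M2 :=
  let th := theta a in
  mkM2 (RtoC (1 / sin th)) (mkC 0 (- (cos th / sin th)))
       (mkC 0 (cos th / sin th)) (RtoC (1 / sin th)).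

Definition Bmat (l s : R) : M2 := mkM2 (Cexpi (l * s)) C0 C0 (Cexpi (- (l * s))).

(** T(alpha, ell, sigma) = A(alpha_n)B(ell_n) ... A(alpha_1)B(ell_1);
    sequences are indexed from 1 (alpha 1, ..., alpha n). *)
Fixpoint Tmat (alpha ell : nat -> R) (s : R) (n : nat) : M2 :=
  match n with
  | O => Mid
  | S k => Mmul (Mmul (Amat (alpha (S k))) (Bmat (ell (S k)) s)) (Tmat alpha ell s k)
  end.

(** All sign vectors in {+-1}^n, encoded as boolean lists of length n
    (true = +1, false = -1); entry zeta_j (1 <= j <= n) is the (j-1)-th item. *)
Fixpoint sign_vectors (n : nat) : list (list bool) :=
  match n with
  | O => [[]]
  | S k => map (cons true) (sign_vectors k) ++ map (cons false) (sign_vectors k)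
  end.

Definition zval (z : list bool) (j : nat) : R :=
  if nth (j - 1) z true then 1 else -1.

Definition sign_vectors1 (n : nat) : list (list bool) :=
  filter (fun z => nth 0 z false) (sign_vectors n).

Definition znext_cyc (n : nat) (z : list bool) (j : nat) : R :=
  if Nat.eqb j n then zval z 1 else zval z (S j).
Definition znext_neg (n : nat) (z : list bool) (j : nat) : R :=
  if Nat.eqb j n then -1 else zval z (S j).

Fixpoint Rprod1 (n : nat) (f : nat -> R) : R :=
  match n with O => 1 | S k => Rprod1 k f * f (S k) end.
Fixpoint Rsum1 (n : nat) (f : nat -> R) : R :=
  match n with O => 0 | S k => Rsum1 k f + f (S k) end.

(** p_zeta = prod_{j in ch(zeta)} cos(pi^2/(2 alpha_j)) *)
Definition pfrak (n : nat) (alpha : nat -> R) (z : list bool) : R :=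
  Rprod1 n (fun j => if Req_EM_T (zval z j) (znext_cyc n z j) then 1
                     else cos (theta (alpha j))).
(** q_zeta = prod_{j in ch~(zeta)} cos(pi^2/(2 alpha_j)) *)
Definition qfrak (n : nat) (alpha : nat -> R) (z : list bool) : R :=
  Rprod1 n (fun j => if Req_EM_T (zval z j) (znext_neg n z j) then 1
                     else cos (theta (alpha j))).

Definition ldot (n : nat) (ell : nat -> R) (z : list bool) : R :=
  Rsum1 n (fun j => ell j * zval z j).

Definition sin_prod (n : nat) (alpha : nat -> R) : R :=
  Rprod1 n (fun j => sin (theta (alpha j))).

Definition p_n (n : nat) (alpha ell : nat -> R) (s : R) : C :=
  Cscale (1 / sin_prod n alpha)
    (Csum (map (fun z => Cscale (pfrak n alpha z) (Cexpi (ldot n ell z * s)))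
               (sign_vectors1 n))).

Definition q_n (n : nat) (alpha ell : nat -> R) (s : R) : C :=
  Cmul (mkC 0 (-1))
   (Cscale (1 / sin_prod n alpha)
    (Csum (map (fun z => Cscale (qfrak n alpha z) (Cexpi (- (ldot n ell z * s))))
               (sign_vectors1 n)))).

(* Main.v *)
From Stdlib Require Import Reals List.
From Stdlib Require Import Permutation Lra Lia ZArith.
Require Import Defs.
Import ListNotations.
Open Scope R_scope.

Lemma Ceq (z w : C) : re z = re w -> im z = im w -> z = w.
Proof. destruct z, w; simpl; intros; subst; reflexivity. Qed.

Lemma Cadd_comm a b : Cadd a b = Cadd b a.
Proof. apply Ceq; simpl; ring. Qed.
Lemma Cadd_assoc a b c : Cadd a (Cadd b c) = Cadd (Cadd a b) c.
Proof. apply Ceq; simpl; ring. Qed.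

Lemma Csum_app l1 l2 : Csum (l1 ++ l2) = Cadd (Csum l1) (Csum l2).
Proof.
  induction l1; simpl.
  - apply Ceq; unfold C0, RtoC; simpl; ring.
  - rewrite IHl1. apply Cadd_assoc.
Qed.

Lemma Csum_perm l1 l2 : Permutation l1 l2 -> Csum l1 = Csum l2.
Proof.
  induction 1; simpl; auto.
  - rewrite IHPermutation; auto.
  - rewrite !Cadd_assoc, (Cadd_comm y x); auto.
  - congruence.
Qed.

Lemma Perm_filter {A} (f : A -> bool) l l' :
  Permutation l l' -> Permutation (filter f l) (filter f l').
Proof.
  induction 1; simpl; auto.
  - destruct (f x); auto.
  - destruct (f x), (f y); auto. constructor.
  - eapply perm_trans; eauto.
Qed.

Lemma Csum_lin {A} (h : C -> C) (g : A -> C) l :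
  h C0 = C0 -> (forall a b, h (Cadd a b) = Cadd (h a) (h b)) ->
  Csum (map (fun z => h (g z)) l) = h (Csum (map g l)).
Proof.
  intros H0 HD. induction l; simpl; auto.
  rewrite HD, IHl; auto.
Qed.

Definition st (z : list bool) := z ++ [true].
Definition sf (z : list bool) := z ++ [false].

Lemma sv_perm n : Permutation (sign_vectors (S n))
  (map st (sign_vectors n) ++ map sf (sign_vectors n)).
Proof.
  induction n.
  - simpl. apply Permutation_refl.
  - change (sign_vectors (S (S n))) with
      (map (cons true) (sign_vectors (S n)) ++ map (cons false) (sign_vectors (S n))).
    eapply perm_trans.
    + apply Permutation_app; apply Permutation_map; exact IHn.
    + change (sign_vectors (S n)) with
        (map (cons true) (sign_vectors n) ++ map (cons false) (sign_vectors n)).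
      rewrite !map_app, !map_map. unfold st, sf. simpl.
      rewrite <- !app_assoc. apply Permutation_app_head.
      rewrite !app_assoc. apply Permutation_app_tail.
      apply Permutation_app_comm.
Qed.

Lemma sv_length n z : In z (sign_vectors n) -> length z = n.
Proof.
  revert z; induction n; simpl; intros z H.
  - destruct H as [<-|[]]; reflexivity.
  - apply in_app_or in H; destruct H as [H|H]; apply in_map_iff in H;
      destruct H as [x [<- Hx]]; simpl; f_equal; auto.
Qed.

Lemma sv1_perm m : Permutation (sign_vectors1 (S (S m)))
  (map st (sign_vectors1 (S m)) ++ map sf (sign_vectors1 (S m))).
Proof.
  unfold sign_vectors1.
  eapply perm_trans. { apply Perm_filter. apply sv_perm. }
  rewrite filter_app, !filter_map_swap.
  rewrite (filter_ext_in (fun a => nth 0 (st a) false) (fun z => nth 0 z false)).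
  2:{ intros a Ha. apply sv_length in Ha. destruct a; simpl in *; [lia|reflexivity]. }
  rewrite (filter_ext_in (fun a => nth 0 (sf a) false) (fun z => nth 0 z false)).
  2:{ intros a Ha. apply sv_length in Ha. destruct a; simpl in *; [lia|reflexivity]. }
  apply Permutation_refl.
Qed.

Lemma zval_app_lt z b n j : length z = n -> (1 <= j <= n)%nat ->
  zval (z ++ [b]) j = zval z j.
Proof. intros Hl Hj. unfold zval. rewrite app_nth1 by lia. reflexivity. Qed.

Lemma zval_app_last z b n : length z = n ->
  zval (z ++ [b]) (S n) = if b then 1 else -1.
Proof.
  intros Hl. unfold zval. rewrite app_nth2 by lia.
  replace (S n - 1 - length z)%nat with 0%nat by lia. reflexivity.
Qed.

Lemma Rprod1_ext n f g : (forall j, (1 <= j <= n)%nat -> f j = g j) ->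
  Rprod1 n f = Rprod1 n g.
Proof.
  induction n; simpl; intros H; auto.
  rewrite IHn by (intros; apply H; lia). rewrite H by lia. reflexivity.
Qed.

Lemma Rsum1_ext n f g : (forall j, (1 <= j <= n)%nat -> f j = g j) ->
  Rsum1 n f = Rsum1 n g.
Proof.
  induction n; simpl; intros H; auto.
  rewrite IHn by (intros; apply H; lia). rewrite H by lia. reflexivity.
Qed.

Lemma Rprod1_nz n f : (forall j, (1 <= j <= n)%nat -> f j <> 0) -> Rprod1 n f <> 0.
Proof.
  induction n; simpl; intros H.
  - lra.
  - apply Rmult_integral_contrapositive; split; [apply IHn; intros; apply H; lia|apply H; lia].
Qed.

Definition bv (b : bool) : R := if b then 1 else -1.

Lemma sv1_prop n z : In z (sign_vectors1 n) -> length z = n /\ nth 0 z false = true.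
Proof.
  unfold sign_vectors1. intros H. apply filter_In in H as [H1 H2].
  split; [apply sv_length; auto | auto].
Qed.

Lemma zval1 z : nth 0 z false = true -> zval z 1 = 1.
Proof. intros H. unfold zval. simpl. destruct z; simpl in *; [discriminate|now rewrite H]. Qed.

Ltac reqcase := repeat match goal with |- context [Req_EM_T ?a ?b] =>
  destruct (Req_EM_T a b) end; try lra.

Lemma zval_pm z j : zval z j = 1 \/ zval z j = -1.
Proof. unfold zval; destruct (nth _ _ _); auto. Qed.

Lemma pfrak_snoc m alpha z b : length z = S m -> nth 0 z false = true ->
  pfrak (S (S m)) alpha (z ++ [b]) =
  if b then pfrak (S m) alpha z else qfrak (S m) alpha z * cos (theta (alpha (S (S m)))).
Proof.
  intros Hl Hh. unfold pfrak, qfrak.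
  change (Rprod1 (S (S m)) ?f) with (Rprod1 (S m) f * f (S (S m))).
  change (Rprod1 (S m) ?f) with (Rprod1 m f * f (S m)).
  assert (E1 : forall (F G : nat -> R) , (forall j, (1<=j<=m)%nat -> F j = G j) ->
     Rprod1 m F = Rprod1 m G) by (intros; apply Rprod1_ext; auto).
  unfold znext_cyc, znext_neg.
  rewrite (Nat.eqb_refl (S m)).
  replace (Nat.eqb (S m) (S (S m))) with false by (symmetry; apply Nat.eqb_neq; lia).
  rewrite (Nat.eqb_refl (S (S m))).
  rewrite (zval_app_last z b (S m) Hl), (zval_app_lt z b (S m) (S m) Hl) by lia.
  rewrite (zval_app_lt z b (S m) 1 Hl) by lia. rewrite (zval1 z Hh).
  pose proof (zval_pm z (S m)) as Hz.
  destruct b; simpl.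
  - erewrite (E1 _ (fun j => if Req_EM_T (zval z j) (if Nat.eqb j (S m) then 1 else zval z (S j)) then 1 else cos (theta (alpha j)))).
    2:{ intros j Hj. replace (Nat.eqb j (S (S m))) with false by (symmetry; apply Nat.eqb_neq; lia).
        replace (Nat.eqb j (S m)) with false by (symmetry; apply Nat.eqb_neq; lia).
        rewrite (zval_app_lt z true (S m) j Hl) by lia.
        rewrite (zval_app_lt z true (S m) (S j) Hl) by lia. reflexivity. }
    reqcase.
  - erewrite (E1 _ (fun j => if Req_EM_T (zval z j) (if Nat.eqb j (S m) then -1 else zval z (S j)) then 1 else cos (theta (alpha j)))).
    2:{ intros j Hj. replace (Nat.eqb j (S (S m))) with false by (symmetry; apply Nat.eqb_neq; lia).
        replace (Nat.eqb j (S m)) with false by (symmetry; apply Nat.eqb_neq; lia).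
        rewrite (zval_app_lt z false (S m) j Hl) by lia.
        rewrite (zval_app_lt z false (S m) (S j) Hl) by lia. reflexivity. }
    reqcase.
Qed.

Lemma qfrak_snoc m alpha z b : length z = S m -> nth 0 z false = true ->
  qfrak (S (S m)) alpha (z ++ [b]) =
  if b then pfrak (S m) alpha z * cos (theta (alpha (S (S m)))) else qfrak (S m) alpha z.
Proof.
  intros Hl Hh. unfold pfrak, qfrak.
  change (Rprod1 (S (S m)) ?f) with (Rprod1 (S m) f * f (S (S m))).
  change (Rprod1 (S m) ?f) with (Rprod1 m f * f (S m)).
  assert (E1 : forall (F G : nat -> R) , (forall j, (1<=j<=m)%nat -> F j = G j) ->
     Rprod1 m F = Rprod1 m G) by (intros; apply Rprod1_ext; auto).
  unfold znext_cyc, znext_neg.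
  rewrite (Nat.eqb_refl (S m)).
  replace (Nat.eqb (S m) (S (S m))) with false by (symmetry; apply Nat.eqb_neq; lia).
  rewrite (Nat.eqb_refl (S (S m))).
  rewrite (zval_app_last z b (S m) Hl), (zval_app_lt z b (S m) (S m) Hl) by lia.
  rewrite (zval1 z Hh).
  pose proof (zval_pm z (S m)) as Hz.
  destruct b; simpl.
  - erewrite (E1 _ (fun j => if Req_EM_T (zval z j) (if Nat.eqb j (S m) then 1 else zval z (S j)) then 1 else cos (theta (alpha j)))).
    2:{ intros j Hj. replace (Nat.eqb j (S (S m))) with false by (symmetry; apply Nat.eqb_neq; lia).
        replace (Nat.eqb j (S m)) with false by (symmetry; apply Nat.eqb_neq; lia).
        rewrite (zval_app_lt z true (S m) j Hl) by lia.
        rewrite (zval_app_lt z true (S m) (S j) Hl) by lia. reflexivity. }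
    reqcase.
  - erewrite (E1 _ (fun j => if Req_EM_T (zval z j) (if Nat.eqb j (S m) then -1 else zval z (S j)) then 1 else cos (theta (alpha j)))).
    2:{ intros j Hj. replace (Nat.eqb j (S (S m))) with false by (symmetry; apply Nat.eqb_neq; lia).
        replace (Nat.eqb j (S m)) with false by (symmetry; apply Nat.eqb_neq; lia).
        rewrite (zval_app_lt z false (S m) j Hl) by lia.
        rewrite (zval_app_lt z false (S m) (S j) Hl) by lia. reflexivity. }
    reqcase.
Qed.

Lemma ldot_snoc n ell z b : length z = n ->
  ldot (S n) ell (z ++ [b]) = ldot n ell z + ell (S n) * bv b.
Proof.
  intros Hl. unfold ldot. simpl. rewrite (zval_app_last z b n Hl).
  f_equal. apply Rsum1_ext. intros j Hj. rewrite (zval_app_lt z b n j Hl Hj). reflexivity.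
Qed.

Lemma sumP_snoc m alpha ell s :
  let L := sign_vectors1 (S m) in
  let fP n z := Cscale (pfrak n alpha z) (Cexpi (ldot n ell z * s)) in
  let fQ n z := Cscale (qfrak n alpha z) (Cexpi (- (ldot n ell z * s))) in
  let w := Cexpi (ell (S (S m)) * s) in
  let w' := Cexpi (- (ell (S (S m)) * s)) in
  let c := cos (theta (alpha (S (S m)))) in
  Csum (map (fP (S (S m))) (sign_vectors1 (S (S m)))) =
    Cadd (Cmul w (Csum (map (fP (S m)) L))) (Cscale c (Cmul w' (Cconj (Csum (map (fQ (S m)) L))))) /\
  Csum (map (fQ (S (S m))) (sign_vectors1 (S (S m)))) =
    Cadd (Cmul w (Csum (map (fQ (S m)) L))) (Cscale c (Cmul w' (Cconj (Csum (map (fP (S m)) L))))).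
Proof.
  intros L fP fQ w w' c.
  rewrite !(Csum_perm _ _ (Permutation_map _ (sv1_perm m))).
  rewrite !map_app, !Csum_app, !map_map.
  assert (Hw : forall a, Cexpi (a + ell (S (S m)) * s) = Cmul w (Cexpi a)).
  { intros a. apply Ceq; unfold w; simpl; [rewrite cos_plus|rewrite sin_plus]; ring. }
  assert (Hw' : forall a, Cexpi (a - ell (S (S m)) * s) = Cmul w' (Cexpi a)).
  { intros a. apply Ceq; unfold w'; simpl; [rewrite cos_minus, cos_neg, sin_neg|rewrite sin_minus, cos_neg, sin_neg]; ring. }
  split.
  - rewrite (map_ext_in (fun z => fP (S (S m)) (st z)) (fun z => Cmul w (fP (S m) z))).
    2:{ intros z Hz. apply sv1_prop in Hz as [Hl Hh]. unfold st, fP, fQ.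
        rewrite pfrak_snoc, ldot_snoc by auto. simpl bv.
        rewrite Rmult_1_r, Rmult_plus_distr_r, Hw.
        apply Ceq; simpl; ring. }
    rewrite (map_ext_in (fun z => fP (S (S m)) (sf z)) (fun z => Cscale c (Cmul w' (Cconj (fQ (S m) z))))).
    2:{ intros z Hz. apply sv1_prop in Hz as [Hl Hh]. unfold sf, fP, fQ.
        rewrite pfrak_snoc, ldot_snoc by auto. simpl bv.
        replace ((ldot (S m) ell z + ell (S (S m)) * -1) * s) with
          (ldot (S m) ell z * s - ell (S (S m)) * s) by ring.
        rewrite Hw'. unfold c.
        apply Ceq; simpl; rewrite ?cos_neg, ?sin_neg; ring. }
    rewrite (Csum_lin (fun v => Cmul w v) (fP (S m))).
    2:{ apply Ceq; unfold C0, RtoC; simpl; ring. }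
    2:{ intros; apply Ceq; simpl; ring. }
    rewrite (Csum_lin (fun v => Cscale c (Cmul w' (Cconj v))) (fQ (S m))).
    2:{ apply Ceq; unfold C0, RtoC; simpl; ring. }
    2:{ intros; apply Ceq; simpl; ring. }
    reflexivity.
  - rewrite (map_ext_in (fun z => fQ (S (S m)) (st z)) (fun z => Cscale c (Cmul w' (Cconj (fP (S m) z))))).
    2:{ intros z Hz. apply sv1_prop in Hz as [Hl Hh]. unfold st, fP, fQ.
        rewrite qfrak_snoc, ldot_snoc by auto. simpl bv.
        replace (- ((ldot (S m) ell z + ell (S (S m)) * 1) * s)) with
          (- (ldot (S m) ell z * s) - ell (S (S m)) * s) by ring.
        rewrite Hw'. unfold c.
        apply Ceq; simpl; rewrite ?cos_neg, ?sin_neg; ring. }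
    rewrite (map_ext_in (fun z => fQ (S (S m)) (sf z)) (fun z => Cmul w (fQ (S m) z))).
    2:{ intros z Hz. apply sv1_prop in Hz as [Hl Hh]. unfold sf, fP, fQ.
        rewrite qfrak_snoc, ldot_snoc by auto. simpl bv.
        replace (- ((ldot (S m) ell z + ell (S (S m)) * -1) * s)) with
          (- (ldot (S m) ell z * s) + ell (S (S m)) * s) by ring.
        rewrite Hw.
        apply Ceq; simpl; ring. }
    rewrite (Csum_lin (fun v => Cmul w v) (fQ (S m))).
    2:{ apply Ceq; unfold C0, RtoC; simpl; ring. }
    2:{ intros; apply Ceq; simpl; ring. }
    rewrite (Csum_lin (fun v => Cscale c (Cmul w' (Cconj v))) (fP (S m))).
    2:{ apply Ceq; unfold C0, RtoC; simpl; ring. }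
    2:{ intros; apply Ceq; simpl; ring. }
    apply Cadd_comm.
Qed.

Lemma T_form m alpha ell s :
  (forall j, (1 <= j <= S m)%nat -> sin (theta (alpha j)) <> 0) ->
  Tmat alpha ell s (S m) =
  mkM2 (p_n (S m) alpha ell s) (q_n (S m) alpha ell s)
       (Cconj (q_n (S m) alpha ell s)) (Cconj (p_n (S m) alpha ell s)).
Proof.
  induction m; intros Hs.
  - assert (Hs1 := Hs 1%nat ltac:(lia)).
    unfold p_n, q_n. replace (sign_vectors1 1) with [[true]] by reflexivity. cbn [map Csum].
    assert (E1 : pfrak 1 alpha [true] = 1).
    { unfold pfrak, znext_cyc. simpl. unfold zval; simpl. reqcase. }
    assert (E2 : qfrak 1 alpha [true] = cos (theta (alpha 1%nat))).
    { unfold qfrak, znext_neg. simpl. unfold zval; simpl. reqcase. }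
    assert (E3 : ldot 1 ell [true] = ell 1%nat).
    { unfold ldot, zval. simpl. ring. }
    assert (E4 : sin_prod 1 alpha = sin (theta (alpha 1%nat))).
    { unfold sin_prod. simpl. ring. }
    rewrite E1, E2, E3, E4.
    simpl. unfold Mmul, Amat, Bmat, Mid, Cexpi, Cscale, Cconj, Cmul, Cadd, C0, C1, RtoC; simpl.
    rewrite cos_neg, sin_neg.
    f_equal; apply Ceq; simpl; field; auto.
  - rewrite <- (Nat.add_1_r (S m)) at 1. rewrite Nat.add_1_r.
    change (Tmat alpha ell s (S (S m))) with
      (Mmul (Mmul (Amat (alpha (S (S m)))) (Bmat (ell (S (S m))) s)) (Tmat alpha ell s (S m))).
    rewrite IHm by (intros; apply Hs; lia).
    pose proof (sumP_snoc m alpha ell s) as H. cbv beta zeta in H. destruct H as [H1 H2].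
    unfold p_n, q_n. rewrite H1, H2.
    assert (ES : sin_prod (S (S m)) alpha = sin_prod (S m) alpha * sin (theta (alpha (S (S m))))).
    { reflexivity. }
    rewrite ES.
    assert (HS : sin_prod (S m) alpha <> 0).
    { apply Rprod1_nz. intros; apply Hs; lia. }
    assert (Hs2 := Hs (S (S m)) ltac:(lia)).
    set (X := Csum _) in *. set (Y := Csum (map (fun z => Cscale (qfrak (S m) alpha z) _) _)) in *.
    destruct X as [x1 x2], Y as [y1 y2].
    unfold Mmul, Amat, Bmat, Cexpi, Cscale, Cconj, Cmul, Cadd, RtoC; simpl.
    rewrite !cos_neg, !sin_neg.
    f_equal; apply Ceq; simpl; field; auto.
Qed.

Definition Mdet (X : M2) : C := Cadd (Cmul (m11 X) (m22 X)) (Cscale (-1) (Cmul (m12 X) (m21 X))).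

Lemma Mdet_mul X Y : Mdet (Mmul X Y) = Cmul (Mdet X) (Mdet Y).
Proof.
  destruct X as [[] [] [] []], Y as [[] [] [] []].
  apply Ceq; unfold Mdet, Mmul, Cmul, Cadd, Cscale; simpl; ring.
Qed.

Lemma detA a : sin (theta a) <> 0 -> Mdet (Amat a) = C1.
Proof.
  intros Hs. pose proof (sin2_cos2 (theta a)) as Hp. unfold Rsqr in Hp.
  set (u := sin (theta a)) in *. set (v := cos (theta a)) in *.
  apply Ceq; unfold Mdet, Amat, C1, RtoC, Cmul, Cadd, Cscale; simpl; fold u v.
  - replace (1 / u * (1 / u) - 0 * 0 + -1 * (0 * 0 - - (v / u) * (v / u)))
      with ((1 - v * v) / (u * u)) by (field; auto).
    replace (1 - v * v) with (u * u) by lra. field; auto.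
  - field; auto.
Qed.

Lemma detB l s : Mdet (Bmat l s) = C1.
Proof.
  pose proof (sin2_cos2 (l * s)) as Hq. unfold Rsqr in Hq.
  apply Ceq; unfold Mdet, Bmat, Cexpi, C1, C0, RtoC, Cmul, Cadd, Cscale; simpl;
    rewrite ?cos_neg, ?sin_neg; lra.
Qed.

Lemma Tdet alpha ell s n :
  (forall j, (1 <= j <= n)%nat -> sin (theta (alpha j)) <> 0) ->
  Mdet (Tmat alpha ell s n) = C1.
Proof.
  induction n; intros Hs.
  - apply Ceq; unfold Mdet, Mid, C1, C0, RtoC, Cmul, Cadd, Cscale; simpl; ring.
  - simpl Tmat. rewrite !Mdet_mul, IHn by (intros; apply Hs; lia).
    rewrite detA by (apply Hs; lia). rewrite detB.
    apply Ceq; unfold C1, RtoC, Cmul; simpl; ring.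
Qed.

Lemma sin_theta_nz a : 0 < a < PI -> ~ in_E a -> sin (theta a) <> 0.
Proof.
  intros [Ha1 Ha2] HE H0. apply sin_eq_0_0 in H0 as [k Hk].
  unfold theta in Hk. pose proof PI_RGT_0 as Hpi.
  assert (Hk2 : PI = 2 * a * IZR k).
  { apply (Rmult_eq_reg_l (PI / (2 * a))). 2:{ apply Rgt_not_eq. apply Rdiv_lt_0_compat; lra. }
    replace (PI / (2 * a) * PI) with (PI ^ 2 / (2 * a)) by (field; lra).
    rewrite Hk. field. lra. }
  assert (Hkp : (0 < k)%Z).
  { apply lt_IZR. simpl. nra. }
  apply HE. exists (Z.to_nat k). split; [lia|].
  rewrite INR_IZR_INZ, Z2Nat.id by lia.
  rewrite Hk2. field. apply not_0_IZR. lia.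
Qed.

Theorem theorem6p1 (n : nat) (alpha ell : nat -> R) (sigma : R) :
  (1 <= n)%nat ->
  (forall j, (1 <= j <= n)%nat -> 0 < alpha j < PI /\ ~ in_E (alpha j)) ->
  (forall j, (1 <= j <= n)%nat -> 0 < ell j) ->
  let T := Tmat alpha ell sigma n in
  let p := p_n n alpha ell sigma in
  let q := q_n n alpha ell sigma in
  T = mkM2 p q (Cconj q) (Cconj p) /\ Cnorm2 p - Cnorm2 q = 1.
Proof.
  intros Hn Ha Hl T p q.
  assert (Hs : forall j, (1 <= j <= n)%nat -> sin (theta (alpha j)) <> 0).
  { intros j Hj. destruct (Ha j Hj). apply sin_theta_nz; auto. }
  destruct n as [|m]; [lia|].
  assert (HT : T = mkM2 p q (Cconj q) (Cconj p)) by (apply T_form; auto).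
  split; auto.
  pose proof (Tdet alpha ell sigma (S m) Hs) as Hd. fold T in Hd. rewrite HT in Hd.
  clearbody p q. destruct p as [p1 p2], q as [q1 q2].
  apply (f_equal re) in Hd. unfold Mdet, Cmul, Cadd, Cscale, Cconj, C1, RtoC in Hd; simpl in Hd.
  unfold Cnorm2; simpl. lra.
Qed.
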